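(* Let $F$, $H$, $X$, $\Omega$, $Q$ and the sequences generated by the IneIREG method be as described in the context, and suppose $H$ is $\mu$-strongly monotone for some $\mu>0$. Suppose $0<\lambda_k<1/L_k$ for all $k\ge0$, where $L_k:=L_F+\eta_kL_H$; and $\alpha_0\in[0,1]$ and $\alpha_{k+1}\le(1-\beta_k)\alpha_k$ for all $k\ge0$, where $\beta_k:=\big(\frac{1}{1-\lambda_k^2L_k^2}+\frac{1}{2\lambda_k\eta_k\mu}\big)^{-1}$. Define $p_{-1}:=1$, $p_k:=\big(\prod_{i=0}^k(1-\beta_i)\big)^{-1}$ for $k\ge0$, and for $k\ge1$, $\Lambda_k:=\sum_{j=0}^{k-1}\lambda_j\eta_jp_j$, $\overline y_k:=\Lambda_k^{-1}\sum_{j=0}^{k-1}\lambda_j\eta_jp_jy_j$. Then for all $k\ge1$, $$-B_H\,\mathrm{dist}(\overline y_k,Q)\le\mathrm{Gap}(\overline y_k,H,Q)\le\frac{1}{\Lambda_k}\Big(\frac{D_X^2+\sum_{j=0}^{k-1}p_{j-1}\delta_j}{2}\Big).$$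
   Context: Work in $\mathbb{R}^n$ with Euclidean inner product $\langle\cdot,\cdot\rangle$ and norm $\|\cdot\|$. The maps $F\colon \mathrm{Dom}\,F\to\mathbb{R}^n$ and $H\colon\mathrm{Dom}\,H\to\mathbb{R}^n$ are monotone and Lipschitz continuous with constants $L_F>0$ and $L_H>0$; $H$ is $\mu$-strongly monotone means $\langle H(x)-H(y),x-y\rangle\ge\mu\|x-y\|^2$ for all $x,y\in\mathrm{Dom}\,H$. $X$ is a nonempty compact convex set and $\Omega$ a nonempty closed convex set with $X\subset\Omega\subset\mathrm{Dom}\,F\cap\mathrm{Dom}\,H$; $P_X,P_\Omega$ denote orthogonal projections. $Q:=\{x\in X:\langle F(x),y-x\rangle\ge0\ \forall y\in X\}$ is assumed nonempty. $D_X:=\sup_{x,y\in X}\|x-y\|$, $B_H:=\sup_{x\in Q}\|H(x)\|$, $\mathrm{dist}(y,Q)$ is the Euclidean distance to $Q$. $\mathrm{Gap}(z,H,Q):=\sup_{x\in Q}\langle H(x),z-x\rangle$. IneIREG method: start with $x_0=x_{-1}\in X$; for $k=0,1,\dots$, with parameters $\alpha_k\ge0$, $\lambda_k>0$, $\eta_k>0$, set $w_k=x_k+\alpha_k(x_k-x_{k-1})$, $w'_k=P_\Omega(w_k)$, $y_k=P_X\big(w_k-\lambda_k(F(w'_k)+\eta_kH(w'_k))\big)$, $x_{k+1}=P_X\big(w_k-\lambda_k(F(y_k)+\eta_kH(y_k))\big)$. Also $\delta_k:=\alpha_k(1+\alpha_k)\|x_k-x_{k-1}\|^2$ for $k\ge0$.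 *)

(* Defs.v *)
From HB Require Import structures.
From mathcomp Require Import all_boot all_order all_algebra.
From mathcomp Require Import all_classical all_reals all_analysis.
Set Implicit Arguments. Unset Strict Implicit. Unset Printing Implicit Defensive.
Import Order.TTheory GRing.Theory Num.Theory.
Import numFieldNormedType.Exports.
Local Open Scope classical_set_scope.
Local Open Scope ring_scope.

Section Defs.
Variables (R : realType) (n : nat).
Notation vec := 'rV[R]_n.

Definition dotv (u v : vec) : R := \sum_(i < n) u ord0 i * v ord0 i.
Definition enorm (u : vec) : R := Num.sqrt (dotv u u).

Definition convex_set_of (C : set vec) : Prop :=
  forall x y (t : R), C x -> C y -> 0 <= t <= 1 -> C (t *: x + (1 - t) *: y).

Definition is_eproj (C : set vec) (w p : vec) : Prop :=
  C p /\ forall x, C x -> enorm (w - p) <= enorm (w - x).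

Definition op_monotone (D : set vec) (G : vec -> vec) : Prop :=
  forall x y, D x -> D y -> 0 <= dotv (G x - G y) (x - y).

Definition op_strongly_monotone (D : set vec) (G : vec -> vec) (mu : R) : Prop :=
  forall x y, D x -> D y -> mu * enorm (x - y) ^+ 2 <= dotv (G x - G y) (x - y).

Definition op_lipschitz (D : set vec) (G : vec -> vec) (L : R) : Prop :=
  forall x y, D x -> D y -> enorm (G x - G y) <= L * enorm (x - y).

Definition VIsol (F : vec -> vec) (X : set vec) : set vec :=
  [set x | X x /\ forall y, X y -> 0 <= dotv (F x) (y - x)].

Definition diam_set (X : set vec) : R :=
  sup [set r | exists x y, X x /\ X y /\ r = enorm (x - y)].

Definition bound_on (H : vec -> vec) (Q : set vec) : R :=
  sup [set r | exists x, Q x /\ r = enorm (H x)].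

Definition dist_to (y : vec) (Q : set vec) : R :=
  inf [set r | exists x, Q x /\ r = enorm (y - x)].

Definition Gap (z : vec) (H : vec -> vec) (Q : set vec) : R :=
  sup [set r | exists x, Q x /\ r = dotv (H x) (z - x)].

End Defs.

(* Main.v *)
Require Import Defs.
From HB Require Import structures.
From mathcomp Require Import all_boot all_order all_algebra.
From mathcomp Require Import all_classical all_reals all_analysis.
From mathcomp Require Import ring lra.
Import Order.TTheory GRing.Theory Num.Theory.
Import numFieldNormedType.Exports.
Local Open Scope classical_set_scope.
Local Open Scope ring_scope.

Section Aux.
Variables (R : realType) (n : nat).
Notation vec := 'rV[R]_n.
Implicit Types u v w p x y z : vec.

Lemma Xbounded (X : set vec) : compact X ->
  exists M : R, forall x, X x -> `|x| <= M.
Proof.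
move=> /compact_bounded [M0 [_ HM]].
exists (M0 + 1) => x Xx.
by apply: (HM (M0 + 1)) => //; lra.
Qed.

Lemma coord_le u (i : 'I_n) : `|u ord0 i| <= `|u|.
Proof.
rewrite /Num.norm /= mx_normrE.
exact: (le_bigmax 0 (fun ij : 'I_1 * 'I_n => `|u ij.1 ij.2|) (ord0, i)).
Qed.

Ltac coord := rewrite /dotv; repeat progress (rewrite ?mulr_sumr ?mulr_suml -?sumrN -?big_split /=);
  apply: eq_bigr => i _; rewrite ?mxE; ring.

Lemma dotvC u v : dotv u v = dotv v u.
Proof. coord. Qed.

Lemma test u v (a : R) : dotv (a *: u - v) (a *: u - v) = a^+2 * dotv u u - 2 * a * dotv u v + dotv v v.
Proof. coord. Qed.


Lemma sqn_ge0 u : 0 <= dotv u u.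
Proof. rewrite /dotv; apply: sumr_ge0 => i _; rewrite -expr2; exact: sqr_ge0. Qed.

Lemma enorm_ge0 u : 0 <= enorm u.
Proof. exact: sqrtr_ge0. Qed.

Lemma enorm_sq u : enorm u ^+ 2 = dotv u u.
Proof. by rewrite /enorm sqr_sqrtr // sqn_ge0. Qed.

Lemma enorm_le u v : enorm u <= enorm v -> dotv u u <= dotv v v.
Proof. by rewrite /enorm ler_sqrt // sqn_ge0. Qed.

Lemma sqn_expand u v (t : R) :
  dotv (t *: u - v) (t *: u - v) = t^+2 * dotv u u - 2 * t * dotv u v + dotv v v.
Proof. coord. Qed.

Lemma CS u v : dotv u v <= enorm u * enorm v.
Proof.
have su0 := sqn_ge0 u; have sv0 := sqn_ge0 v.
have [d0|dpos] := lerP (dotv u v) 0.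
  apply: (le_trans d0); exact: mulr_ge0 (enorm_ge0 u) (enorm_ge0 v).
case: (eqVneq (dotv u u) 0) => [su|sun].
  exfalso.
  set d := dotv u v in dpos *.
  have := sqn_ge0 (((dotv v v + 1) / d) *: u - v).
  rewrite sqn_expand su.
  have -> : 2 * ((dotv v v + 1) / d) * d = 2 * (dotv v v + 1).
    by field; rewrite gt_eqF.
  lra.
have sp : 0 < dotv u u by rewrite lt_neqAle eq_sym sun.
have h := sqn_expand u v (dotv u v / dotv u u).
have := sqn_ge0 ((dotv u v / dotv u u) *: u - v).
rewrite h.
have -> : (dotv u v / dotv u u) ^+ 2 * dotv u u - 2 * (dotv u v / dotv u u) * dotv u v
   = - (dotv u v ^+ 2 / dotv u u) by field; rewrite gt_eqF.
move=> hh.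
have hd : dotv u v ^+ 2 <= dotv u u * dotv v v.
  have : dotv u v ^+ 2 / dotv u u <= dotv v v by lra.
  by rewrite ler_pdivrMr // mulrC.
rewrite /enorm -sqrtrM //.
rewrite -(ger0_norm (ltW dpos)) -sqrtr_sqr.
by rewrite ler_sqrt // mulr_ge0.
Qed.

Lemma enorm_coord u : enorm u <= n%:R * `|u|.
Proof.
have h0 : 0 <= n%:R * `|u| by rewrite mulr_ge0.
rewrite /enorm -(ger0_norm h0) -sqrtr_sqr ler_sqrt ?sqr_ge0 //.
have : dotv u u <= \sum_(i < n) `|u|^+2.
  rewrite /dotv; apply: ler_sum => i _.
  rewrite -expr2 -real_normK ?num_real //. 
  apply: lerXn2r; rewrite ?nnegrE ?coord_le //.
rewrite sumr_const card_ord => hh; apply: (le_trans hh).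
rewrite -[`|u| ^+ 2 *+ n]mulr_natl exprMn.
apply: (ler_wpM2r (sqr_ge0 _)).
rewrite expr2 -natrM ler_nat.
by case: (n) => [|m] //; rewrite mulSn leq_addr.
Qed.


Lemma sqn_conv w p x (t : R) :
  dotv (w - (t *: x + (1 - t) *: p)) (w - (t *: x + (1 - t) *: p)) =
  dotv (w - p) (w - p) - 2 * t * dotv (w - p) (x - p) + t^+2 * dotv (x - p) (x - p).
Proof. coord. Qed.

Lemma proj_vi (C : set vec) w p x : convex_set_of C -> is_eproj C w p -> C x ->
  dotv (w - p) (x - p) <= 0.
Proof.
move=> cC [Cp Hp] Cx.
have e0 : 0 <= dotv (x - p) (x - p) := sqn_ge0 (x - p).
set d := dotv (w - p) (x - p). set e := dotv (x - p) (x - p) in e0 *.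
rewrite leNgt; apply/negP => dpos.
have de : 0 < d + e by lra.
set t := d / (d + e).
have t0 : 0 < t by rewrite divr_gt0.
have t1 : t <= 1 by rewrite ler_pdivrMr // mul1r; lra.
have Cq : C (t *: x + (1 - t) *: p) by apply: cC => //; rewrite (ltW t0) t1.
have := enorm_le _ _ (Hp _ Cq); rewrite sqn_conv -/d -/e => h.
have te : t * (d + e) = d by rewrite /t divfK // gt_eqF.
have h2 : 2 * t * d <= t * (t * e) by rewrite mulrA -expr2; lra.
have h3 : t * e = d - t * d by lra.
rewrite h3 in h2.
have : 0 < t * (d + t * d) by apply: mulr_gt0 => //; apply: addr_gt0 => //; exact: mulr_gt0.
lra.
Qed.

Lemma proj_nonexp (C : set vec) w p x : convex_set_of C -> is_eproj C w p -> C x ->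
  dotv (p - x) (p - x) <= dotv (w - x) (w - x).
Proof.
move=> cC hp Cx; have := proj_vi _ _ _ _ cC hp Cx.
have -> : dotv (w - x) (w - x) = dotv (p - x) (p - x) + dotv (w - p) (w - p) - 2 * dotv (w - p) (x - p) by coord.
have := sqn_ge0 (w - p); lra.
Qed.


Lemma lipG (F H : vec -> vec) (D1 D2 : set vec) (LF LH eta : R) a b :
  op_lipschitz D1 F LF -> op_lipschitz D2 H LH -> 0 <= eta ->
  D1 a -> D1 b -> D2 a -> D2 b ->
  dotv ((F a + eta *: H a) - (F b + eta *: H b)) ((F a + eta *: H a) - (F b + eta *: H b))
  <= (LF + eta * LH) ^+ 2 * dotv (a - b) (a - b).
Proof.
move=> lF lH et0 a1 b1 a2 b2.
have hf := lF a b a1 b1; have hh := lH a b a2 b2.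
have -> : dotv ((F a + eta *: H a) - (F b + eta *: H b)) ((F a + eta *: H a) - (F b + eta *: H b))
  = dotv (F a - F b) (F a - F b) + eta ^+ 2 * dotv (H a - H b) (H a - H b)
    + 2 * eta * dotv (F a - F b) (H a - H b) by coord.
have cs := CS (F a - F b) (H a - H b).
rewrite -!enorm_sq.
set ef := enorm (F a - F b) in hf cs *; set eh := enorm (H a - H b) in hh cs *.
set r := enorm (a - b) in hf hh *.
have ef0 : 0 <= ef by apply: enorm_ge0.
have eh0 : 0 <= eh by apply: enorm_ge0.
have e1 : ef ^+ 2 + eta ^+ 2 * eh ^+ 2 + 2 * eta * dotv (F a - F b) (H a - H b)
   <= (ef + eta * eh) ^+ 2.
  have : eta * dotv (F a - F b) (H a - H b) <= eta * (ef * eh) by apply: ler_wpM2l.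
  move=> hh2.
  have -> : (ef + eta * eh) ^+ 2 = ef ^+ 2 + eta ^+ 2 * eh ^+ 2 + 2 * (eta * (ef * eh)) by ring.
  lra.
apply: (le_trans e1).
have -> : (LF + eta * LH) ^+ 2 * r ^+ 2 = (LF * r + eta * (LH * r)) ^+ 2 by ring.
rewrite !expr2; apply: ler_pM.
- by apply: addr_ge0 => //; apply: mulr_ge0.
- by apply: addr_ge0 => //; apply: mulr_ge0.
- by apply: lerD => //; apply: ler_wpM2l.
- by apply: lerD => //; apply: ler_wpM2l.
Qed.


Lemma step_id (F H : vec -> vec) (lam eta : R) w wp y xp z :
  let g1 := F wp + eta *: H wp in let g2 := F y + eta *: H y in
  dotv (xp - z) (xp - z) - dotv (w - z) (w - z) =
  2 * dotv ((w - lam *: g2) - xp) (z - xp) + 2 * dotv ((w - lam *: g1) - y) (xp - y)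
  + lam ^+ 2 * dotv (g1 - g2) (g1 - g2)
  - dotv (lam *: (g1 - g2) - (xp - y)) (lam *: (g1 - g2) - (xp - y))
  - dotv (w - y) (w - y)
  - 2 * lam * dotv (F y - F z) (y - z) - 2 * lam * dotv (F z) (y - z)
  - 2 * lam * eta * dotv (H y - H z) (y - z) - 2 * lam * eta * dotv (H z) (y - z).
Proof. move=> g1 g2; rewrite /g1 /g2; coord. Qed.


Lemma step (F H : vec -> vec) (DomF DomH X Omega : set vec) (LF LH mu lam eta : R)
    w wp y xp z :
  op_monotone DomF F -> op_lipschitz DomF F LF -> op_lipschitz DomH H LH ->
  op_strongly_monotone DomH H mu ->
  convex_set_of X -> convex_set_of Omega -> X `<=` Omega -> Omega `<=` DomF `&` DomH ->
  0 < lam -> 0 < eta ->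
  is_eproj Omega w wp ->
  is_eproj X (w - lam *: (F wp + eta *: H wp)) y ->
  is_eproj X (w - lam *: (F y + eta *: H y)) xp ->
  X z -> (forall v, X v -> 0 <= dotv (F z) (v - z)) ->
  dotv (xp - z) (xp - z) <= dotv (w - z) (w - z)
    - (1 - lam ^+ 2 * (LF + eta * LH) ^+ 2) * dotv (w - y) (w - y)
    - 2 * lam * eta * mu * dotv (y - z) (y - z)
    - 2 * lam * eta * dotv (H z) (y - z).
Proof.
move=> mF lF lH smH cX cO XO OD l0 e0 pw py px Xz Qz.
have Xy : X y by case: py.
have Xxp : X xp by case: px.
have Ow : Omega wp by case: pw.
have [Fwp Hwp] := OD _ Ow.
have [Fy Hy] := OD _ (XO _ Xy).
have [Fz Hz] := OD _ (XO _ Xz).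
have s1 := proj_vi _ _ _ _ cX py Xxp.
have s2 := proj_vi _ _ _ _ cX px Xz.
have s3 := lipG _ _ _ _ _ _ _ _ _ lF lH (ltW e0) Fwp Fy Hwp Hy.
have s3' := proj_nonexp _ _ _ _ cO pw (XO _ Xy).
set g1 := F wp + eta *: H wp in s1 s3 *; set g2 := F y + eta *: H y in s2 s3 *.
have s4 := sqn_ge0 (lam *: (g1 - g2) - (xp - y)).
have s5 := mF _ _ Fy Fz.
have s6 := Qz _ Xy.
have s7 := smH _ _ Hy Hz; rewrite enorm_sq in s7.
have id := step_id F H lam eta w wp y xp z; cbv zeta in id; rewrite -/g1 -/g2 in id.
set L := LF + eta * LH in s3 *.
have L2 : lam ^+ 2 * dotv (g1 - g2) (g1 - g2) <= lam ^+ 2 * (L ^+ 2 * dotv (w - y) (w - y)).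
  apply: ler_wpM2l; first exact: sqr_ge0.
  apply: (le_trans s3); apply: ler_wpM2l => //; exact: sqr_ge0.
have M2 : 2 * lam * eta * (mu * dotv (y - z) (y - z)) <= 2 * lam * eta * dotv (H y - H z) (y - z).
  by apply: ler_wpM2l => //; rewrite !mulr_ge0 // ltW.
have L5 : 0 <= 2 * lam * dotv (F y - F z) (y - z) by rewrite !mulr_ge0 // ltW.
have L6 : 0 <= 2 * lam * dotv (F z) (y - z) by rewrite !mulr_ge0 // ltW.
have -> : (1 - lam ^+ 2 * L ^+ 2) * dotv (w - y) (w - y) =
   dotv (w - y) (w - y) - lam ^+ 2 * (L ^+ 2 * dotv (w - y) (w - y)) by ring.
have -> : 2 * lam * eta * mu * dotv (y - z) (y - z) = 2 * lam * eta * (mu * dotv (y - z) (y - z)) by ring.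
lra.
Qed.


Lemma beta_comb (a b : R) u v : 0 < a -> 0 < b ->
  a * b / (a + b) * dotv (u + v) (u + v) <= a * dotv u u + b * dotv v v.
Proof.
move=> a0 b0.
have id : (a + b) * (a * dotv u u + b * dotv v v) - a * b * dotv (u + v) (u + v)
   = dotv (a *: u - b *: v) (a *: u - b *: v) by coord.
have := sqn_ge0 (a *: u - b *: v); rewrite -id => h.
have ab : 0 < a + b by rewrite addr_gt0.
rewrite mulrAC ler_pdivrMr // mulrC; lra.
Qed.

Lemma inertia_id x x' z (al : R) :
  dotv (x + al *: (x - x') - z) (x + al *: (x - x') - z) =
  (1 + al) * dotv (x - z) (x - z) - al * dotv (x' - z) (x' - z)
  + al * (1 + al) * dotv (x - x') (x - x').
Proof. coord. Qed.

Lemma dotv_sumr k u (f : nat -> vec) :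
  dotv u (\sum_(j < k) f j) = \sum_(j < k) dotv u (f j).
Proof.
rewrite /dotv.
under eq_bigr => i _ do rewrite summxE mulr_sumr.
exact: exchange_big.
Qed.

Lemma dotvZBr u v z (a : R) : dotv u (a *: v - z) = a * dotv u v - dotv u z.
Proof. coord. Qed.

Lemma dotvZr u v (a : R) : dotv u (a *: v) = a * dotv u v.
Proof. coord. Qed.

Lemma dotvBr u v z : dotv u (v - z) = dotv u v - dotv u z.
Proof. coord. Qed.

Lemma dotvNl u v : dotv (- u) v = - dotv u v.
Proof. coord. Qed.

Lemma enormN u : enorm (- u) = enorm u.
Proof. rewrite /enorm; congr Num.sqrt; coord. Qed.

Lemma sq_le (a b : R) : 0 <= a -> a <= b -> a ^+ 2 <= b ^+ 2.
Proof. move=> a0 ab; rewrite !expr2; apply: ler_pM => //. Qed.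

Lemma enorm_tri u v : enorm (u + v) <= enorm u + enorm v.
Proof.
have h0 : 0 <= enorm u + enorm v by rewrite addr_ge0 ?enorm_ge0.
rewrite {1}/enorm -(ger0_norm h0) -sqrtr_sqr ler_sqrt ?sqr_ge0 //.
have -> : dotv (u + v) (u + v) = dotv u u + dotv v v + 2 * dotv u v by coord.
have := CS u v; rewrite -!enorm_sq.
have -> : (enorm u + enorm v) ^+ 2 = enorm u ^+ 2 + enorm v ^+ 2 + 2 * (enorm u * enorm v) by ring.
lra.
Qed.

End Aux.

Theorem proposition4p6 (R : realType) (n : nat)
  (F H : 'rV[R]_n -> 'rV[R]_n) (DomF DomH X Omega : set 'rV[R]_n)
  (LF LH mu : R) (alpha lambda eta : nat -> R)
  (x wp y : nat -> 'rV[R]_n) :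
  0 < LF -> 0 < LH ->
  op_monotone DomF F -> op_lipschitz DomF F LF ->
  op_monotone DomH H -> op_lipschitz DomH H LH ->
  0 < mu -> op_strongly_monotone DomH H mu ->
  X !=set0 -> compact X -> convex_set_of X ->
  Omega !=set0 -> closed Omega -> convex_set_of Omega ->
  X `<=` Omega -> Omega `<=` DomF `&` DomH ->
  VIsol F X !=set0 ->
  (forall k, 0 <= alpha k) -> (forall k, 0 < lambda k) -> (forall k, 0 < eta k) ->
  X (x 0) ->
  (forall k, let w := x k + alpha k *: (x k - x k.-1) in
     is_eproj Omega w (wp k) /\
     is_eproj X (w - lambda k *: (F (wp k) + eta k *: H (wp k))) (y k) /\
     is_eproj X (w - lambda k *: (F (y k) + eta k *: H (y k))) (x k.+1)) ->
  let L k := LF + eta k * LH in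
  (forall k, lambda k < (L k)^-1) ->
  let beta k := ((1 - lambda k ^+ 2 * L k ^+ 2)^-1
                 + (2 * lambda k * eta k * mu)^-1)^-1 in
  0 <= alpha 0 <= 1 ->
  (forall k, alpha k.+1 <= (1 - beta k) * alpha k) ->
  let P j := (\prod_(i < j) (1 - beta i))^-1 in
  let delta k := alpha k * (1 + alpha k) * enorm (x k - x k.-1) ^+ 2 in
  let Q := VIsol F X in
  forall k, (1 <= k)%N ->
  let Lam := \sum_(j < k) lambda j * eta j * P j.+1 in
  let ybar := Lam^-1 *: \sum_(j < k) (lambda j * eta j * P j.+1) *: y j in
  - bound_on H Q * dist_to ybar Q <= Gap ybar H Q /\
  Gap ybar H Q <= Lam^-1 * ((diam_set X ^+ 2 + \sum_(j < k) P j * delta j) / 2).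
Proof.
move=> LF0 LH0 mF lF mH lH mu0 smH X0 cpX cX O0 clO cO XO OD Q0 al0 la0 et0 Xx0 Hit
  L lamL beta al01 alb P delta Q k k1 Lam ybar.
have L0 : forall j, 0 < L j by move=> j; rewrite /L addr_gt0 // mulr_gt0.
have aj : forall j, 0 < 1 - lambda j ^+ 2 * L j ^+ 2 /\ 1 - lambda j ^+ 2 * L j ^+ 2 <= 1.
  move=> j; have h := lamL j; rewrite -(ltr_pM2r (L0 j)) mulVf ?gt_eqF // in h.
  have h0 : 0 < lambda j * L j by rewrite mulr_gt0.
  have : (lambda j * L j) ^+ 2 < 1 by rewrite expr_lt1 // ltW.
  rewrite exprMn => h1; split; first lra.
  have := sqr_ge0 (lambda j); have := sqr_ge0 (L j) => h2 h3.
  have : 0 <= lambda j ^+ 2 * L j ^+ 2 by rewrite mulr_ge0.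
  lra.
have bj : forall j, 0 < 2 * lambda j * eta j * mu by move=> j; rewrite !mulr_gt0.
have betaE : forall j, beta j = (1 - lambda j ^+ 2 * L j ^+ 2) * (2 * lambda j * eta j * mu)
     / ((1 - lambda j ^+ 2 * L j ^+ 2) + (2 * lambda j * eta j * mu)).
  move=> j; rewrite /beta; have [a0 _] := aj j; have b0 := bj j.
  have a0' : 0 < 1 - (lambda j * L j) ^+ 2 by rewrite exprMn.
  have b0' : 0 < 2 * lambda j * eta j * mu by [].
  have s0 : 0 < 1 - (lambda j * L j) ^+ 2 + 2 * lambda j * eta j * mu by rewrite addr_gt0.
  by field; rewrite (gt_eqF s0) (gt_eqF mu0) (gt_eqF (et0 j)) (gt_eqF (la0 j)) (gt_eqF a0').
have b1 : forall j, 0 < 1 - beta j.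
  move=> j; rewrite betaE; have [a0 a1] := aj j; have b0 := bj j.
  set a := 1 - lambda j ^+ 2 * L j ^+ 2 in a0 a1 *; set b := 2 * lambda j * eta j * mu in b0 *.
  have ab : 0 < a + b by rewrite addr_gt0.
  rewrite subr_gt0 ltr_pdivrMr // mul1r.
  have : a * b <= 1 * b by rewrite ler_wpM2r // ltW.
  lra.
have P0 : P 0%N = 1 by rewrite /P big_ord0 invr1.
have Pgt0 : forall j, 0 < P j.
  by move=> j; rewrite /P invr_gt0; apply: prodr_gt0 => i _; exact: b1.
have PS : forall j, P j.+1 * (1 - beta j) = P j.
  move=> j; rewrite /P big_ord_recr /= invfM divfK //.
  by rewrite gt_eqF.
have Xx : forall j, X (x j).
  by elim=> [|j IH] //; have [_ [_ [h _]]] := Hit j.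
have Xy : forall j, X (y j) by move=> j; have [_ [[h _] _]] := Hit j.
set D := diam_set X.
have [M HM] := Xbounded _ _ _ cpX.
have hsD : has_sup [set r | exists a b, X a /\ X b /\ r = enorm (a - b)].
  split.
    by case: X0 => a Xa; exists (enorm (a - a)), a, a.
  exists (n%:R * (M + M)) => r [a [b [Xa [Xb ->]]]].
  apply: (le_trans (enorm_coord _ _ _)); apply: ler_wpM2l => //.
  apply: (le_trans (ler_normB _ _)); apply: lerD; exact: HM.
have Dub : forall a b, X a -> X b -> enorm (a - b) <= D.
  move=> a b Xa Xb; apply: (sup_upper_bound hsD); by exists a, b.
have D0 : 0 <= D.
  case: X0 => a Xa; apply: le_trans (Dub a a Xa Xa); exact: enorm_ge0.
have Dsq : forall a b, X a -> X b -> dotv (a - b) (a - b) <= D ^+ 2.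
  move=> a b Xa Xb; rewrite -enorm_sq; apply: sq_le; [exact: enorm_ge0| exact: Dub].
have key : forall z, Q z -> \sum_(j < k) 2 * (lambda j * eta j * P j.+1 * dotv (H z) (y j - z))
    <= D ^+ 2 + \sum_(j < k) P j * delta j.
  move=> z [Xz Qz].
  pose A j := dotv (x j - z) (x j - z).
  pose B j := dotv (x j.-1 - z) (x j.-1 - z).
  pose t j := dotv (H z) (y j - z).
  have stp : forall j, P j.+1 * A j.+1 <= P j * ((1 + alpha j) * A j - alpha j * B j + delta j)
      - 2 * (lambda j * eta j * P j.+1 * t j).
    move=> j; have [h1 [h2 h3]] := Hit j.
    have st := step _ _ F H DomF DomH X Omega LF LH mu (lambda j) (eta j) _ _ _ _ z mF lF lH smH
      cX cO XO OD (la0 j) (et0 j) h1 h2 h3 Xz Qz.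
    have [a0 _] := aj j; have b0 := bj j.
    set w := x j + alpha j *: (x j - x j.-1) in st.
    have bc := beta_comb _ _ _ _ (w - y j) (y j - z) a0 b0.
    rewrite addrA subrK -betaE in bc.
    have ie := inertia_id _ _ (x j) (x j.-1) z (alpha j); rewrite -/w in ie.
    have hA : A j.+1 <= (1 - beta j) * dotv (w - z) (w - z) - 2 * lambda j * eta j * t j.
      rewrite /A /t; rewrite /L in bc; lra.
    have := ler_wpM2l (ltW (Pgt0 j.+1)) hA.
    rewrite mulrBr (mulrA (P j.+1) (1 - beta j)) PS ie /delta enorm_sq /A /B /t => hh.
    apply: (le_trans hh); rewrite le_eqVlt; apply/orP; left; apply/eqP; ring.
  have AD : forall j, A j <= D ^+ 2 by move=> j; exact: Dsq.
  have BD : forall j, B j <= D ^+ 2 by move=> j; exact: Dsq.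
  have A0 : forall j, 0 <= A j by move=> j; exact: sqn_ge0.
  have W : forall K, P K * A K - P K * alpha K * B K
      + \sum_(j < K) (2 * (lambda j * eta j * P j.+1 * t j) - P j * delta j)
      <= (1 - P K * alpha K) * D ^+ 2.
    elim=> [|K IH].
      rewrite big_ord0 P0 /B /=.
      have /andP [a0 a1] := al01.
      have a2 : 0 <= 1 - alpha 0 by rewrite subr_ge0.
      have := ler_wpM2l a2 (AD 0%N).
      rewrite /A; lra.
    rewrite big_ord_recr /=.
    have -> : B K.+1 = A K by [].
    have sK := stp K.
    have cK : P K.+1 * alpha K.+1 <= P K * alpha K.
      have := ler_wpM2l (ltW (Pgt0 K.+1)) (alb K).
      by rewrite mulrA PS.
    have cK' : 0 <= P K * alpha K - P K.+1 * alpha K.+1 by rewrite subr_ge0.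
    have := ler_wpM2l cK' (AD K).
    lra.
  have := W k.
  have := mulr_ge0 (ltW (Pgt0 k)) (A0 k).
  have := ler_wpM2l (mulr_ge0 (ltW (Pgt0 k)) (al0 k)) (BD k).
  rewrite sumrB; lra.
pose c j := lambda j * eta j * P j.+1.
have c0 : forall j, 0 < c j by move=> j; rewrite /c !mulr_gt0.
have Lam0 : 0 < Lam.
  have gen : forall K, (1 <= K)%N -> 0 < \sum_(j < K) c j.
    case=> // K' _; rewrite big_ord_recr /=.
    apply: ltr_wpDl; last exact: c0.
    by apply: sumr_ge0 => j _; exact: ltW (c0 j).
  exact: gen k k1.
have gapE : forall z, dotv (H z) (ybar - z) = Lam^-1 * \sum_(j < k) c j * dotv (H z) (y j - z).
  move=> z; rewrite /ybar dotvZBr (dotv_sumr _ _ k (H z) (fun j => (lambda j * eta j * P j.+1) *: y j)).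
  under eq_bigr => j _ do rewrite dotvZr.
  under [X in _ = _ * X]eq_bigr => j _ do rewrite dotvBr mulrBr.
  rewrite sumrB -mulr_suml -/Lam.
  by field; rewrite gt_eqF.
set U := Lam^-1 * ((D ^+ 2 + \sum_(j < k) P j * delta j) / 2).
have Gub : forall z, Q z -> dotv (H z) (ybar - z) <= U.
  move=> z Qz; rewrite gapE /U; apply: ler_wpM2l; first by rewrite invr_ge0 ltW.
  have := key z Qz; rewrite -mulr_sumr => h.
  rewrite ler_pdivlMr //; rewrite mulrC; exact: h.
have [z0 Qz0] := Q0.
have hsG : has_sup [set r | exists x0, Q x0 /\ r = dotv (H x0) (ybar - x0)].
  split; first by exists (dotv (H z0) (ybar - z0)), z0.
  by exists U => r [z [Qz ->]]; exact: Gub.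
have Gge : forall z, Q z -> dotv (H z) (ybar - z) <= Gap ybar H Q.
  by move=> z Qz; apply: (sup_upper_bound hsG); exists z.
have QD : forall z, Q z -> DomH z.
  by move=> z [Xz _]; have [] := OD _ (XO _ Xz).
have hsB : has_sup [set r | exists x0, Q x0 /\ r = enorm (H x0)].
  split; first by exists (enorm (H z0)), z0.
  exists (enorm (H z0) + LH * D) => r [z [Qz ->]].
  have -> : H z = H z0 + (H z - H z0) by rewrite addrC subrK.
  apply: (le_trans (enorm_tri _ _ _ _)); apply: lerD => //.
  apply: (le_trans (lH _ _ (QD _ Qz) (QD _ Qz0))); apply: ler_wpM2l; first exact: ltW.
  by apply: Dub; [case: Qz | case: Qz0].
set Bv := bound_on H Q.
have BvH : forall z, Q z -> enorm (H z) <= Bv.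
  by move=> z Qz; apply: (sup_upper_bound hsB); exists z.
have Bv0 : 0 <= Bv by apply: le_trans (BvH _ Qz0); exact: enorm_ge0.
have low : forall z, Q z -> - Bv * enorm (ybar - z) <= Gap ybar H Q.
  move=> z Qz; apply: le_trans (Gge _ Qz).
  have := CS _ _ (- H z) (ybar - z); rewrite dotvNl enormN => h.
  have := ler_wpM2r (enorm_ge0 _ _ (ybar - z)) (BvH _ Qz).
  lra.
split; last first.
  by rewrite /Gap; apply: ge_sup; [exists (dotv (H z0) (ybar - z0)), z0 | move=> r [z [Qz ->]]; exact: Gub].
have [B0|Bp] := eqVneq Bv 0.
  have := low _ Qz0; rewrite B0 oppr0 !mul0r => h; exact: h.
have Bpos : 0 < Bv by rewrite lt_neqAle eq_sym Bp.
have : - Gap ybar H Q / Bv <= dist_to ybar Q.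
  rewrite /dist_to; apply: lb_le_inf; first by exists (enorm (ybar - z0)), z0.
  move=> r [z [Qz ->]]; rewrite ler_pdivrMr //.
  have := low _ Qz; lra.
rewrite ler_pdivrMr // => h; lra.
Qed.
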